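(* Let $d=2$ and $n\ge3$ odd, i.e. $\alpha=n/2$, and let $\lambda=\pi/2$ (so $\varkappa=\pi/(2n)$). Then $v_1=-w_{(n-1)/2}$ and $u_0=-w_{(n+1)/2}$, and $$\hat P(t)=\frac{R(t)\prod_{j=0}^{n-1}(t-w_j)(t+w_j)}{(t^2+1)^2}$$ is a polynomial in $t$, with coefficients affine-linear in $(x,y)$, of degree exactly $2n-4$ (its coefficient of $t^{2n-4}$ is a non-constant affine function of $x,y$).
   Context: Let $\eta=\frac{\pi}{2}\cdot\frac{n-2}{n}$, so that $\alpha:=\pi/(\pi-2\eta)=n/2$, and $d=2$. Let $\lambda=\pi/2$ and $\varkappa=(\pi-\lambda-\eta)/2=\pi/(2n)$. Let $x,y$ be real. Define $\rho=\dfrac{\sin2\eta}{\sin\varkappa\,\sin(\varkappa+2\eta)}$, $v_k=\cot(\frac{\varkappa}{2}+\frac{\pi k}{2})$, $u_k=\cot(\frac{\varkappa}{2}+\eta+\frac{\pi k}{2})$ ($k=0,1$), $w_j=\cot(\frac{\varkappa}{2}+\frac{\pi j}{n})$ ($j=0,\dots,n-1$), and $$R(t)=x\rho\frac{(t^2+1)^2}{\prod_{k=0}^{1}(t-v_k)(t-u_k)}+y\rho\frac{(t^2+1)^2}{\prod_{k=0}^{1}(t+v_k)(t+u_k)}-2\cot\varkappa\,\frac{(t^2+1)^2}{\prod_{k=0}^{1}(t-v_k)(t+v_k)}+2\alpha\cot(\alpha\varkappa)\,\frac{(t^2+1)^n}{\prod_{j=0}^{n-1}(t-w_j)(t+w_j)}.$$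 For $t=\cot(\phi/2)$, $R(t)$ equals the function $g(\phi)$ whose real double roots $\phi\in(-\varkappa,\varkappa)$ parametrize the arctic curve of the six-vertex model with domain wall boundary conditions. *)

(* Defs.v *)
From Stdlib Require Import Reals Lra Lia List.
Import ListNotations.
Open Scope R_scope.

Definition cot (x : R) : R := cos x / sin x.

Definition prodR (m : nat) (f : nat -> R) : R :=
  fold_right Rmult 1 (map f (seq 0 m)).

(* parameters, with d = 2, alpha = n/2, lambda = pi/2 *)
Definition eta (n : nat) : R := PI / 2 * ((INR n - 2) / INR n).
Definition alpha (n : nat) : R := PI / (PI - 2 * eta n).
Definition lambda : R := PI / 2.
Definition kappa (n : nat) : R := (PI - lambda - eta n) / 2.
Definition rho (n : nat) : R :=
  sin (2 * eta n) / (sin (kappa n) * sin (kappa n + 2 * eta n)).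

Definition v (n k : nat) : R := cot (kappa n / 2 + PI * INR k / 2).
Definition u (n k : nat) : R := cot (kappa n / 2 + eta n + PI * INR k / 2).
Definition w (n j : nat) : R := cot (kappa n / 2 + PI * INR j / INR n).

Definition prodW (n : nat) (t : R) : R :=
  prodR n (fun j => (t - w n j) * (t + w n j)).

Definition Rfun (n : nat) (x y t : R) : R :=
  x * rho n * (t ^ 2 + 1) ^ 2
    / (prodR 2 (fun k => (t - v n k) * (t - u n k)))
  + y * rho n * (t ^ 2 + 1) ^ 2
    / (prodR 2 (fun k => (t + v n k) * (t + u n k)))
  - 2 * cot (kappa n) * (t ^ 2 + 1) ^ 2
    / (prodR 2 (fun k => (t - v n k) * (t + v n k)))
  + 2 * alpha n * cot (alpha n * kappa n) * (t ^ 2 + 1) ^ n / prodW n t.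

Definition Phat (n : nat) (x y t : R) : R :=
  Rfun n x y t * prodW n t / (t ^ 2 + 1) ^ 2.

Definition admissible (n : nat) (t : R) : Prop :=
  (forall k, (k < 2)%nat ->
     t - v n k <> 0 /\ t + v n k <> 0 /\ t - u n k <> 0 /\ t + u n k <> 0) /\
  (forall j, (j < n)%nat -> t - w n j <> 0 /\ t + w n j <> 0).

(* Main.v *)
Require Import Defs.
From Stdlib Require Import Reals Lra Lia List.
Import ListNotations.
Open Scope R_scope.

Fixpoint peval (p : list R) (t : R) : R :=
  match p with nil => 0 | a :: q => a + t * peval q t end.
Fixpoint padd (p q : list R) : list R :=
  match p, q with nil, _ => q | _, nil => p | a :: p', b :: q' => (a + b) :: padd p' q' end.
Definition pscale (c : R) (p : list R) := map (Rmult c) p.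
Definition plin (r : R) (p : list R) := padd (0 :: p) (pscale (- r) p).
Definition pquad (p : list R) := padd (0 :: 0 :: p) p.
Fixpoint plist (rs : list R) : list R :=
  match rs with nil => [1] | r :: rs' => plin r (plist rs') end.
Fixpoint ppq (k : nat) : list R :=
  match k with O => [1] | S k => pquad (ppq k) end.

Lemma peval_padd p q t : peval (padd p q) t = peval p t + peval q t.
Proof. revert q; induction p; intros q; destruct q; simpl; try ring.
rewrite IHp; ring. Qed.
Lemma peval_pscale c p t : peval (pscale c p) t = c * peval p t.
Proof. induction p; simpl; [ring|]. unfold pscale in *; simpl; rewrite IHp; ring. Qed.
Lemma length_padd p q : length (padd p q) = Nat.max (length p) (length q).
Proof. revert q; induction p; intros q; destruct q; simpl; auto. Qed.
Lemma nth_padd p q k : nth k (padd p q) 0 = nth k p 0 + nth k q 0.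
Proof. revert q k; induction p; intros q k.
 - simpl. destruct k; simpl; ring.
 - destruct q; destruct k; simpl; try ring; try (destruct k; simpl; ring). apply IHp. Qed.
Lemma nth_pscale c p k : nth k (pscale c p) 0 = c * nth k p 0.
Proof. revert k; induction p; intros k; destruct k; simpl; try ring; auto. Qed.
Lemma length_pscale c p : length (pscale c p) = length p.
Proof. apply length_map. Qed.

Lemma plist_len rs : length (plist rs) = S (length rs).
Proof. induction rs; simpl; auto. unfold plin. rewrite length_padd, length_pscale.
simpl. rewrite IHrs. rewrite Nat.max_l; lia. Qed.
Lemma plist_lead rs : nth (length rs) (plist rs) 0 = 1.
Proof. induction rs; simpl; auto. unfold plin. rewrite nth_padd, nth_pscale.
simpl. rewrite IHrs. rewrite nth_overflow; [ring | rewrite plist_len; lia]. Qed.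
Lemma plist_eval rs t : peval (plist rs) t = fold_right Rmult 1 (map (fun r => t - r) rs).
Proof. induction rs; simpl; [ring|]. unfold plin. rewrite peval_padd, peval_pscale.
simpl. rewrite IHrs. ring. Qed.

Lemma ppq_len k : length (ppq k) = S (2 * k).
Proof. induction k; [reflexivity|]. cbn [ppq]. unfold pquad. rewrite length_padd. cbn [length]. rewrite IHk. rewrite Nat.max_l by lia. lia. Qed.
Lemma ppq_eval k t : peval (ppq k) t = (t ^ 2 + 1) ^ k.
Proof. induction k; [simpl; ring|]. cbn [ppq]. unfold pquad. rewrite peval_padd. cbn [peval].
rewrite IHk. simpl. ring. Qed.

Lemma sum_zero (f : nat -> R) N : (forall k, f k = 0) -> sum_f_R0 f N = 0.
Proof. intros H; induction N; simpl; rewrite H; [ring| rewrite IHN; ring]. Qed.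
Lemma sum_shift (g : nat -> R) M : sum_f_R0 g (S M) = g O + sum_f_R0 (fun i => g (S i)) M.
Proof. induction M; simpl in *; [ring|]. rewrite IHM. ring. Qed.
Lemma sum_scal (f : nat -> R) c N : sum_f_R0 (fun i => c * f i) N = c * sum_f_R0 f N.
Proof. induction N; simpl; [ring|]. rewrite IHN; ring. Qed.

Lemma peval_sum p t N : (length p <= S N)%nat ->
  peval p t = sum_f_R0 (fun k => nth k p 0 * t ^ k) N.
Proof. revert N; induction p; intros N H.
- simpl. symmetry. apply sum_zero. intros k; destruct k; simpl; ring.
- destruct N.
  + simpl in H. destruct p; simpl in *; [ring | lia].
  + rewrite sum_shift. simpl in H. simpl peval. rewrite (IHp N) by lia. simpl.
    rewrite <- sum_scal. rewrite Rmult_1_r. apply Rplus_eq_compat_l. apply sum_eq. intros i _. ring.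
Qed.
Definition val (n : nat) (p : nat * bool) : R := if snd p then w n (fst p) else - w n (fst p).
Definition pairsl (l : list nat) := flat_map (fun j => [(j, true); (j, false)]) l.
Definition lp n t (l : list (nat * bool)) := fold_right Rmult 1 (map (fun p => t - val n p) l).

Definition peq_dec : forall p q : nat * bool, {p = q} + {p <> q}.
Proof. decide equality; [apply Bool.bool_dec | apply Nat.eq_dec]. Defined.
Fixpoint remove1 (x : nat * bool) (l : list (nat * bool)) :=
  match l with nil => nil | y :: l' => if peq_dec x y then l' else y :: remove1 x l' end.

Lemma lp_remove n t x l : In x l -> lp n t l = (t - val n x) * lp n t (remove1 x l).
Proof. induction l; simpl; intros H; [contradiction|].
destruct (peq_dec x a); subst; [reflexivity|]. destruct H; [congruence|].
unfold lp in *; simpl. rewrite IHl by auto. ring. Qed.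
Lemma In_remove1 x y l : In y l -> y <> x -> In y (remove1 x l).
Proof. induction l; simpl; intros H Hn; auto. destruct (peq_dec x a); subst.
destruct H; [congruence|auto]. simpl. destruct H; auto. Qed.
Lemma len_remove1 x l : In x l -> S (length (remove1 x l)) = length l.
Proof. induction l; simpl; intros H; [contradiction|]. destruct (peq_dec x a); auto.
destruct H; [congruence|]. simpl. rewrite IHl; auto. Qed.

Lemma lp_eval n t l : lp n t l = peval (plist (map (val n) l)) t.
Proof. rewrite plist_eval. unfold lp. rewrite map_map. reflexivity. Qed.

Lemma remove4 n t l p1 p2 p3 p4 : In p1 l -> In p2 l -> In p3 l -> In p4 l ->
  p1 <> p2 -> p1 <> p3 -> p1 <> p4 -> p2 <> p3 -> p2 <> p4 -> p3 <> p4 ->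
  lp n t l = (t - val n p1) * (t - val n p2) * (t - val n p3) * (t - val n p4) *
     lp n t (remove1 p4 (remove1 p3 (remove1 p2 (remove1 p1 l)))) /\
  S (S (S (S (length (remove1 p4 (remove1 p3 (remove1 p2 (remove1 p1 l)))))))) = length l.
Proof. intros. split.
- rewrite (lp_remove n t p1) by auto. rewrite (lp_remove n t p2) by (apply In_remove1; auto).
  rewrite (lp_remove n t p3) by (repeat apply In_remove1; auto).
  rewrite (lp_remove n t p4) by (repeat apply In_remove1; auto). ring.
- rewrite len_remove1 by (repeat apply In_remove1; auto).
  rewrite len_remove1 by (repeat apply In_remove1; auto).
  rewrite len_remove1 by (repeat apply In_remove1; auto).
  rewrite len_remove1 by (repeat apply In_remove1; auto). reflexivity.
Qed.

Lemma In_pairs j b n : (j < n)%nat -> In (j, b) (pairsl (seq 0 n)).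
Proof. intros H. unfold pairsl. apply in_flat_map. exists j. split.
apply in_seq; lia. destruct b; simpl; auto. Qed.
Lemma len_pairs l : length (pairsl l) = (2 * length l)%nat.
Proof. induction l; simpl; auto. rewrite IHl. lia. Qed.
Lemma prodW_lp n t : prodW n t = lp n t (pairsl (seq 0 n)).
Proof. unfold prodW, prodR. generalize (seq 0 n). induction l; simpl; auto.
rewrite IHl. unfold lp, val; simpl. ring. Qed.

Lemma prod_nz (f : nat -> R) l : (forall j, In j l -> f j <> 0) -> fold_right Rmult 1 (map f l) <> 0.
Proof. induction l; simpl; intros H. lra. apply Rmult_integral_contrapositive_currified; auto. Qed.
Lemma cotL x : cot (PI/2 + x) = - cot (PI/2 - x).
Proof. unfold cot. rewrite cos_plus, sin_plus, cos_shift, sin_shift, cos_PI2, sin_PI2.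
replace (1 * cos x + 0 * sin x) with (cos x) by ring. unfold Rdiv; ring. Qed.

Section S.
Variables (n m : nat) (Hm : n = (2 * m + 1)%nat) (hn : (3 <= n)%nat).

Lemma Hmr : INR n = 2 * INR m + 1.
Proof. rewrite Hm, plus_INR, mult_INR. simpl. ring. Qed.

Ltac sc := pose proof PI_RGT_0; pose proof (pos_INR m); rewrite ?Hmr;
  repeat split; intro; lra.

Lemma Ev0 : v n 0 = w n 0.
Proof using Hm hn. unfold v, w. f_equal. change (INR 0) with 0. unfold Rdiv; ring. Qed.

Lemma Ev1 : v n 1 = - w n m.
Proof using Hm hn. unfold v, w. change (INR 1) with 1.
replace (kappa n / 2 + PI * 1 / 2) with (PI/2 + PI/(4 * INR n)).
rewrite cotL. f_equal. f_equal. unfold kappa, eta, lambda. rewrite Hmr. field. sc.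
unfold kappa, eta, lambda. rewrite Hmr. field. sc. Qed.

Lemma Eu0 : u n 0 = - w n (S m).
Proof using Hm hn. unfold u, w. change (INR 0) with 0. rewrite S_INR.
replace (kappa n / 2 + PI * (INR m + 1) / INR n) with (PI/2 + 3 * PI/(4 * INR n)).
rewrite cotL. rewrite Ropp_involutive. f_equal. unfold kappa, eta, lambda. rewrite Hmr. field. sc.
unfold kappa, eta, lambda. rewrite Hmr. field. sc. Qed.

Lemma Eu1 : u n 1 = w n (n - 1).
Proof using Hm hn. unfold u, w. change (INR 1) with 1.
replace (n - 1)%nat with (2 * m)%nat by lia. rewrite mult_INR. f_equal.
unfold kappa, eta, lambda. rewrite Hmr. simpl. field. sc. Qed.

Lemma rho_pos : 0 < rho n.
Proof using Hm hn.
assert (H3 : 3 <= INR n) by (replace 3 with (INR 3) by (simpl; ring); apply le_INR; lia).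
pose proof PI_RGT_0.
set (a := PI / INR n).
assert (Ha : a * INR n = PI) by (unfold a; field; lra).
assert (a > 0) by (unfold a; apply Rdiv_lt_0_compat; lra).
assert (a * 3 <= PI) by nra.
assert (Hk : kappa n = a / 2) by (unfold kappa, eta, lambda, a; field; lra).
assert (He : 2 * eta n = PI - 2 * a) by (unfold eta, a; field; lra).
unfold rho. rewrite He, Hk.
apply Rdiv_lt_0_compat; [|apply Rmult_lt_0_compat]; apply sin_gt_0; lra.
Qed.
End S.

Lemma sum_comb (f1 f2 f3 f4 : nat -> R) C K r x y t N :
  sum_f_R0 (fun k => ((C * f4 k + K * f3 k) + r * f1 k * x + r * f2 k * y) * t ^ k) N =
  C * sum_f_R0 (fun k => f4 k * t ^ k) N + K * sum_f_R0 (fun k => f3 k * t ^ k) N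
  + r * x * sum_f_R0 (fun k => f1 k * t ^ k) N + r * y * sum_f_R0 (fun k => f2 k * t ^ k) N.
Proof. induction N; simpl; [ring|]. rewrite IHN. ring. Qed.

Theorem proposition2 (n : nat) (hn : (3 <= n)%nat) (hodd : Nat.Odd n) :
  v n 1 = - w n ((n - 1) / 2) /\
  u n 0 = - w n ((n + 1) / 2) /\
  exists a b c : nat -> R,
    (b (2 * n - 4)%nat <> 0 \/ c (2 * n - 4)%nat <> 0) /\
    forall x y t : R, admissible n t ->
      Phat n x y t =
      sum_f_R0 (fun k => (a k + b k * x + c k * y) * t ^ k) (2 * n - 4).
Proof.
  destruct hodd as [m Hm].
  assert (Hm1 : ((n-1)/2 = m)%nat) by
    (rewrite Hm; replace (2*m+1-1)%nat with (m*2)%nat by lia; apply Nat.div_mul; lia).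
  assert (Hm2 : ((n+1)/2 = S m)%nat) by
    (rewrite Hm; replace (2*m+1+1)%nat with (S m*2)%nat by lia; apply Nat.div_mul; lia).
  rewrite Hm1, Hm2.
  split; [apply (Ev1 n m Hm hn)|]. split; [apply (Eu0 n m Hm hn)|].
  assert (m1 : (1 <= m)%nat) by lia.
  set (L := pairsl (seq 0 n)).
  assert (HL : length L = (2 * n)%nat) by (unfold L; rewrite len_pairs, length_seq; reflexivity).
  set (R1 := remove1 (n-1,true)%nat (remove1 (S m,false) (remove1 (m,false) (remove1 (0,true)%nat L)))).
  set (R2 := remove1 (n-1,false)%nat (remove1 (S m,true) (remove1 (m,true) (remove1 (0,false)%nat L)))).
  set (R3 := remove1 (m,false)%nat (remove1 (m,true) (remove1 (0%nat,false) (remove1 (0,true)%nat L)))).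
  assert (F1 : forall t, lp n t L = (t - val n (0,true)%nat) * (t - val n (m,false)) * (t - val n (S m,false)) * (t - val n (n-1,true)%nat) * lp n t R1 /\ S (S (S (S (length R1)))) = length L).
  { intros t. apply remove4; try (apply In_pairs; lia); intro Hc; inversion Hc; lia. }
  assert (F2 : forall t, lp n t L = (t - val n (0,false)%nat) * (t - val n (m,true)) * (t - val n (S m,true)) * (t - val n (n-1,false)%nat) * lp n t R2 /\ S (S (S (S (length R2)))) = length L).
  { intros t. apply remove4; try (apply In_pairs; lia); intro Hc; inversion Hc; lia. }
  assert (F3 : forall t, lp n t L = (t - val n (0,true)%nat) * (t - val n (0,false)%nat) * (t - val n (m,true)) * (t - val n (m,false)) * lp n t R3 /\ S (S (S (S (length R3)))) = length L).
  { intros t. apply remove4; try (apply In_pairs; lia); intro Hc; inversion Hc; lia. }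
  set (Q1 := plist (map (val n) R1)).
  set (Q2 := plist (map (val n) R2)).
  set (Q3 := plist (map (val n) R3)).
  set (Q4 := ppq (n - 2)).
  assert (l1 : length R1 = (2 * n - 4)%nat) by (destruct (F1 0); lia).
  assert (l2 : length R2 = (2 * n - 4)%nat) by (destruct (F2 0); lia).
  assert (l3 : length R3 = (2 * n - 4)%nat) by (destruct (F3 0); lia).
  set (C := 2 * alpha n * cot (alpha n * kappa n)).
  set (K := - (2 * cot (kappa n))).
  exists (fun k => C * nth k Q4 0 + K * nth k Q3 0),
         (fun k => rho n * nth k Q1 0), (fun k => rho n * nth k Q2 0).
  split.
  { left. unfold Q1. rewrite <- l1. rewrite <- (length_map (val n) R1).
    rewrite plist_lead. pose proof (rho_pos n m Hm hn). lra. }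
  intros x y t [Ha1 Ha2].
  pose proof (Ev0 n m Hm hn) as E0. pose proof (Ev1 n m Hm hn) as E1.
  pose proof (Eu0 n m Hm hn) as E2. pose proof (Eu1 n m Hm hn) as E3.
  assert (HT1 : t * t + 1 <> 0) by (pose proof (pow2_ge_0 t); simpl in *; nra).
  assert (HT : (t ^ 2 + 1) ^ 2 <> 0).
  { apply pow_nonzero. pose proof (pow2_ge_0 t). lra. }
  assert (HPW : prodW n t <> 0).
  { unfold prodW, prodR. apply prod_nz. intros j Hj. apply in_seq in Hj.
    destruct (Ha2 j) as [h1 h2]; [lia|]. apply Rmult_integral_contrapositive_currified; auto. }
  destruct (Ha1 0%nat) as (a1 & a2 & a3 & a4); [lia|].
  destruct (Ha1 1%nat) as (b1 & b2 & b3 & b4); [lia|].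
  assert (P1 : (t ^ 2 + 1) ^ 2 / prodR 2 (fun k => (t - v n k) * (t - u n k)) * prodW n t / (t ^ 2 + 1) ^ 2 = peval Q1 t).
  { unfold Q1. rewrite <- lp_eval. rewrite prodW_lp. fold L. rewrite (proj1 (F1 t)).
    unfold prodR; simpl. unfold val; simpl. rewrite <- E0, <- E1, <- E2, <- E3. field.
    repeat split; auto. }
  assert (P2 : (t ^ 2 + 1) ^ 2 / prodR 2 (fun k => (t + v n k) * (t + u n k)) * prodW n t / (t ^ 2 + 1) ^ 2 = peval Q2 t).
  { unfold Q2. rewrite <- lp_eval. rewrite prodW_lp. fold L. rewrite (proj1 (F2 t)).
    unfold prodR; simpl. unfold val; simpl. rewrite <- E0, <- E3.
    replace (w n m) with (- v n 1) by (rewrite E1; ring).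
    replace (w n (S m)) with (- u n 0) by (rewrite E2; ring). field.
    repeat split; auto. }
  assert (P3 : (t ^ 2 + 1) ^ 2 / prodR 2 (fun k => (t - v n k) * (t + v n k)) * prodW n t / (t ^ 2 + 1) ^ 2 = peval Q3 t).
  { unfold Q3. rewrite <- lp_eval. rewrite prodW_lp. fold L. rewrite (proj1 (F3 t)).
    unfold prodR; simpl. unfold val; simpl. rewrite <- E0.
    replace (w n m) with (- v n 1) by (rewrite E1; ring). field.
    repeat split; auto. }
  assert (P4 : (t ^ 2 + 1) ^ n / prodW n t * prodW n t / (t ^ 2 + 1) ^ 2 = peval Q4 t).
  { unfold Q4. rewrite ppq_eval. replace n with ((n - 2) + 2)%nat at 1 by lia.
    rewrite pow_add. field. split; auto. simpl; rewrite Rmult_1_r; auto. }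
  transitivity (x * rho n * ((t ^ 2 + 1) ^ 2 / prodR 2 (fun k => (t - v n k) * (t - u n k)) * prodW n t / (t ^ 2 + 1) ^ 2)
    + y * rho n * ((t ^ 2 + 1) ^ 2 / prodR 2 (fun k => (t + v n k) * (t + u n k)) * prodW n t / (t ^ 2 + 1) ^ 2)
    + K * ((t ^ 2 + 1) ^ 2 / prodR 2 (fun k => (t - v n k) * (t + v n k)) * prodW n t / (t ^ 2 + 1) ^ 2)
    + C * ((t ^ 2 + 1) ^ n / prodW n t * prodW n t / (t ^ 2 + 1) ^ 2)).
  { unfold Phat, Rfun, K, C. unfold Rdiv. ring. }
  rewrite P1, P2, P3, P4.
  rewrite (sum_comb (fun k => nth k Q1 0) (fun k => nth k Q2 0) (fun k => nth k Q3 0) (fun k => nth k Q4 0)).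
  rewrite (peval_sum Q1 t (2 * n - 4)) by (unfold Q1; rewrite plist_len, length_map; lia).
  rewrite (peval_sum Q2 t (2 * n - 4)) by (unfold Q2; rewrite plist_len, length_map; lia).
  rewrite (peval_sum Q3 t (2 * n - 4)) by (unfold Q3; rewrite plist_len, length_map; lia).
  rewrite (peval_sum Q4 t (2 * n - 4)) by (unfold Q4; rewrite ppq_len; lia).
  ring.
Qed.
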